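(* If $\Bbbk$ is an algebraically closed field of characteristic zero, then $\mathcal O(\lambda)\cong\mathcal O(1)$ for all $\lambda\in\Bbbk^*$. If $\Bbbk=\mathbb R$, then $\mathcal O(\lambda)\cong\mathcal O(1)$ for $\lambda>0$ and $\mathcal O(\lambda)\cong\mathcal O(-1)$ for $\lambda<0$, but $\mathcal O(-1)\not\cong\mathcal O(1)$.
   Context: $\mathcal W$ is the Witt algebra over $\Bbbk$ with basis $L_n$ ($n\in\mathbb{Z}$) and $[L_n,L_m]=(n-m)L_{n+m}$. For $\lambda\in\Bbbk^*$, $\mathcal O(\lambda)$ is the subalgebra of $\mathcal W$ spanned by $L_n-\lambda^nL_{-n}$, $n\ge1$; $\mathcal O=\mathcal O(1)$. *)

(* Defs.v *)
From HB Require Import structures.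
From mathcomp Require Import all_boot all_order all_algebra.
From mathcomp Require Import reals.
Set Implicit Arguments. Unset Strict Implicit. Unset Printing Implicit Defensive.
Import Order.TTheory GRing.Theory Num.Theory.
Local Open Scope ring_scope.

(* The Witt algebra W over a field K, with basis L_n (n : int).
   An element sum_n a_n L_n (finitely many a_n nonzero) is represented by a
   pair of polynomials (p, q): a_n = p`_n for n >= 0 and a_{-(m+1)} = q`_m. *)
Definition W (K : fieldType) := ({poly K} * {poly K})%type.

Definition wcoef (K : fieldType) (x : W K) (n : int) : K :=
  match n with Posz m => x.1`_m | Negz m => x.2`_m end.

(* the element sum_{-M <= n < M} g n L_n *)
Definition wmk (K : fieldType) (M : nat) (g : int -> K) : W K :=
  (\poly_(i < M) g (Posz i), \poly_(i < M) g (Negz i)).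

Definition L (K : fieldType) (n : int) : W K :=
  wmk (`|n|%N.+1) (fun m => if m == n then 1 else 0).

Definition wbound (K : fieldType) (x : W K) : nat := maxn (size x.1) (size x.2).

(* Lie bracket [sum a_i L_i, sum b_j L_j] = sum_{i,j} a_i b_j (i - j) L_{i+j} *)
Definition wbracket (K : fieldType) (x y : W K) : W K :=
  let N := maxn (wbound x) (wbound y) in
  wmk (2 * N)%N (fun n =>
    \sum_(k < 2 * N)
      let i := (k%:Z - N%:Z)%R in
      ((i - (n - i))%:~R * wcoef x i * wcoef y (n - i))).

(* generators L_n - lambda^n L_{-n}, n >= 1 (indexed by n.-1) *)
Definition Ogen (K : fieldType) (lam : K) (m : nat) : W K :=
  L K (Posz m.+1) - lam ^+ m.+1 *: L K (- Posz m.+1).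

Definition inO (K : fieldType) (lam : K) (x : W K) : Prop :=
  exists (m : nat) (c : 'I_m -> K), x = \sum_(i < m) c i *: Ogen lam i.

(* O(a) and O(b) are isomorphic Lie algebras: a bijective linear map
   O(a) -> O(b) preserving the bracket (phi is given on all of W but only its
   restriction to O(a) matters). *)
Definition Oiso (K : fieldType) (a b : K) : Prop :=
  exists phi : W K -> W K,
    [/\ forall x, inO a x -> inO b (phi x),
        forall (c : K) x y, inO a x -> inO a y -> phi (c *: x + y) = c *: phi x + phi y,
        forall x y, inO a x -> inO a y -> phi (wbracket x y) = wbracket (phi x) (phi y),
        forall x y, inO a x -> inO a y -> phi x = phi y -> x = y &
        forall z, inO b z -> exists2 x, inO a x & phi x = z].

(* Main.v *)
Require Import Defs.
From HB Require Import structures.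
From mathcomp Require Import all_boot all_order all_algebra.
From mathcomp Require Import reals.
From mathcomp Require Import zify ring lra.
Import Order.TTheory GRing.Theory Num.Theory.
Local Open Scope ring_scope.
Set Implicit Arguments. Unset Strict Implicit. Unset Printing Implicit Defensive.

Section Basics.
Variable F : fieldType.
Implicit Types (x y : W F) (n : int).

Lemma wcoefD x y n : wcoef (x + y) n = wcoef x n + wcoef y n.
Proof. by case: n => m /=; rewrite coefD. Qed.
Lemma wcoefZ a x n : wcoef (a *: x) n = a * wcoef x n.
Proof. by case: n => m /=; rewrite coefZ. Qed.
Lemma wcoefN x n : wcoef (- x) n = - wcoef x n.
Proof. by case: n => m /=; rewrite coefN. Qed.
Lemma wcoefB x y n : wcoef (x - y) n = wcoef x n - wcoef y n.
Proof. by rewrite wcoefD wcoefN. Qed.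
Lemma wcoef0 n : wcoef (0 : W F) n = 0.
Proof. by case: n => m /=; rewrite coef0. Qed.
Lemma wcoef_sum (I : finType) (G : I -> W F) n :
  wcoef (\sum_i G i) n = \sum_i wcoef (G i) n.
Proof.
apply: (big_ind2 (fun a b => wcoef a n = b)); first by rewrite wcoef0.
  by move=> a b c d <- <-; rewrite wcoefD.
by [].
Qed.

Lemma weqP x y : (forall n, wcoef x n = wcoef y n) -> x = y.
Proof.
case: x y => [p q] [p' q'] H; congr pair; apply/polyP => i.
  exact: (H (Posz i)).
exact: (H (Negz i)).
Qed.

Lemma wcoef_out K x n : (wbound x <= K)%N -> (n < - K%:Z) || (K%:Z <= n) ->
  wcoef x n = 0.
Proof.
rewrite /wbound geq_max => /andP[h1 h2]; case: n => m /= h.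
  apply: nth_default; apply: leq_trans h1 _; move: h; lia.
apply: nth_default; apply: leq_trans h2 _; move: h; rewrite NegzE; lia.
Qed.

Lemma wcoef_wmk M (g : int -> F) n : wcoef (wmk M g) n =
  if (- M%:Z <= n) && (n < M%:Z) then g n else 0.
Proof.
case: n => m /=; rewrite coef_poly.
  by case: ifP; case: ifP => //; lia.
by rewrite NegzE; case: ifP; case: ifP => //; lia.
Qed.

Lemma wbound_wmk M (g : int -> F) : (wbound (wmk M g) <= M)%N.
Proof. by rewrite /wbound geq_max !size_poly. Qed.

Lemma wbound_add x y : (wbound (x + y)%R <= maxn (wbound x) (wbound y))%N.
Proof.
rewrite /wbound geq_max; apply/andP; split.
  by apply: (leq_trans (size_polyD x.1 y.1)); lia.
by apply: (leq_trans (size_polyD x.2 y.2)); lia.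
Qed.

Lemma wbound_scale a x : (wbound (a *: x)%R <= wbound x)%N.
Proof.
rewrite /wbound geq_max; apply/andP; split.
  by apply: (leq_trans (size_scale_leq a x.1)); lia.
by apply: (leq_trans (size_scale_leq a x.2)); lia.
Qed.

Lemma wbound_opp x : wbound (- x) = wbound x.
Proof. by rewrite /wbound /= !size_polyN. Qed.

Definition Psi (K : nat) x : {poly F} :=
  \sum_(k < 2 * K) wcoef x (k%:Z - K%:Z) *: 'X^(k.+1).

Lemma Psi_coef0 K x : (Psi K x)`_0 = 0.
Proof.
rewrite /Psi coef_sum big1 // => k _; by rewrite coefZ coefXn /= mulr0.
Qed.

Lemma Psi_coefS K x j : (Psi K x)`_j.+1 =
  if (j < 2 * K)%N then wcoef x (j%:Z - K%:Z) else 0.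
Proof.
rewrite /Psi coef_sum; case: ltnP => hj.
  rewrite (bigD1 (Ordinal hj)) //= coefZ coefXn eqxx mulr1 big1 ?addr0 //.
  move=> k /negbTE hk; rewrite coefZ coefXn eqSS.
  suff -> : (j == k) = false by rewrite mulr0.
  by apply/negbTE; apply: contraFN hk => /eqP e; apply/eqP/val_inj.
rewrite big1 // => k _; rewrite coefZ coefXn eqSS.
suff -> : (j == k) = false by rewrite mulr0.
by apply/negbTE; move: (ltn_ord k) hj; lia.
Qed.

Lemma PsiD K x y : Psi K (x + y) = Psi K x + Psi K y.
Proof. by rewrite /Psi -big_split; apply: eq_bigr => k _; rewrite wcoefD scalerDl. Qed.
Lemma PsiZ K a x : Psi K (a *: x) = a *: Psi K x.
Proof. by rewrite /Psi scaler_sumr; apply: eq_bigr => k _; rewrite wcoefZ scalerA. Qed.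
Lemma PsiN K x : Psi K (- x) = - Psi K x.
Proof. by rewrite -scaleN1r PsiZ scaleN1r. Qed.
Lemma PsiB K x y : Psi K (x - y) = Psi K x - Psi K y.
Proof. by rewrite PsiD PsiN. Qed.
Lemma Psi0 K : Psi K 0 = 0.
Proof. by rewrite /Psi big1 // => k _; rewrite wcoef0 scale0r. Qed.

Lemma Psi_eq0 K x : (wbound x <= K)%N -> Psi K x = 0 -> x = 0.
Proof.
move=> hb h0; apply: weqP => n; rewrite wcoef0.
case: (boolP ((n < - K%:Z) || (K%:Z <= n))) => hn; first exact: wcoef_out hn.
have e : n = (absz (n + K%:Z))%:Z - K%:Z by move: hn; lia.
have hj : (absz (n + K%:Z)%R < 2 * K)%N by move: hn; lia.
by move: (Psi_coefS K x (absz (n + K%:Z))); rewrite h0 coef0 hj -e => <-.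
Qed.

Lemma Psi_inj K x y : (wbound x <= K)%N -> (wbound y <= K)%N -> Psi K x = Psi K y -> x = y.
Proof.
move=> hx hy e; apply/eqP; rewrite -subr_eq0; apply/eqP; apply: (@Psi_eq0 K).
  apply: leq_trans (wbound_add _ _) _; rewrite wbound_opp geq_max hx hy //.
by rewrite PsiB e subrr.
Qed.

Lemma Psi_shift K d x : (wbound x <= K)%N -> Psi (K + d) x = 'X^d * Psi K x.
Proof.
move=> hb; apply/polyP => j; rewrite coefXnM.
case: j => [|j]; first by rewrite !Psi_coef0; case: ifP.
rewrite !Psi_coefS; case: (ltnP j.+1 d) => h2.
  by case: ifP => _ //; rewrite (wcoef_out hb) //; apply/orP; left; lia.
case e: (j.+1 - d)%N => [|i].
  by rewrite Psi_coef0; case: ifP => _ //; rewrite (wcoef_out hb) //; apply/orP; left; lia.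
rewrite Psi_coefS; case: ifP => h1; case: ifP => h3.
- by congr wcoef; lia.
- by rewrite (wcoef_out hb) //; apply/orP; right; lia.
- lia.
- by [].
Qed.

End Basics.

Section BR.
Variable F : fieldType.
Implicit Types (x y : W F) (n : int).

Definition br (P Q : {poly F}) := P^`() * Q - P * Q^`().

Lemma dPsi N x : (Psi N x)^`() =
  \sum_(k < 2 * N) (wcoef x (k%:Z - N%:Z) * (k.+1)%:R) *: 'X^k.
Proof.
rewrite /Psi raddf_sum /=; apply: eq_bigr => k _.
by rewrite derivZ derivXn /= -scaler_nat scalerA.
Qed.

Lemma br_Psi N x y : br (Psi N x) (Psi N y) =
  \sum_(k < 2 * N) \sum_(l < 2 * N)
    ((k%:R - l%:R) * wcoef x (k%:Z - N%:Z) * wcoef y (l%:Z - N%:Z)) *: 'X^((k + l).+1).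
Proof.
rewrite /br !dPsi /Psi mulr_suml [X in _ - X]mulr_suml -sumrB.
apply: eq_bigr => k _; rewrite mulr_sumr [X in _ - X]mulr_sumr -sumrB.
apply: eq_bigr => l _; rewrite -!mul_polyC !exprS exprD.
ring.
Qed.

Lemma BR0 x y : let N := maxn (wbound x) (wbound y) in
  Psi (2 * N) (wbracket x y) = br (Psi N x) (Psi N y).
Proof.
move=> N; have hy : (wbound y <= N)%N by rewrite leq_max leqnn orbT.
rewrite br_Psi /Psi.
pose T (k m : nat) : {poly F} :=
   (((k%:Z - N%:Z) - ((m%:Z - (2 * N)%N%:Z) - (k%:Z - N%:Z)))%:~R
     * wcoef x (k%:Z - N%:Z) * wcoef y ((m%:Z - (2 * N)%N%:Z) - (k%:Z - N%:Z)))
     *: 'X^(m.+1).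
transitivity (\sum_(m < 2 * (2 * N)) \sum_(k < 2 * N) T k m).
  apply: eq_bigr => m _; rewrite /wbracket -/N wcoef_wmk ifT; last first.
    by move: (ltn_ord m); lia.
  by rewrite scaler_suml.
rewrite exchange_big /=; apply: eq_bigr => k _.
rewrite -(big_mkord xpredT (T k)).
have hk := ltn_ord k.
rewrite (@big_cat_nat _ _ _ k) //=; last by lia.
rewrite [X in _ + X](@big_cat_nat _ _ _ (k + 2 * N)); [ | lia | lia].
have z1 : \sum_(0 <= i < k) T k i = 0.
  rewrite big_nat_cond big1 // => m /andP[/andP[_ hm] _]; rewrite /T.
  by rewrite (wcoef_out hy) ?mulr0 ?scale0r //; apply/orP; left; lia.
have z2 : \sum_(k + 2 * N <= i < 2 * (2 * N)) T k i = 0.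
  rewrite big_nat_cond big1 // => m /andP[/andP[hm1 hm2] _]; rewrite /T.
  by rewrite (wcoef_out hy) ?mulr0 ?scale0r //; apply/orP; right; lia.
rewrite z1 z2 /= add0r addr0.
rewrite -{1}(add0n k) big_addn addKn big_mkord.
apply: eq_bigr => l _; rewrite /T.
have -> : ((k%:Z - N%:Z) - (((l + k)%N%:Z - (2 * N)%N%:Z) - (k%:Z - N%:Z))) = k%:Z - l%:Z by lia.
have -> : (((l + k)%N%:Z - (2 * N)%N%:Z) - (k%:Z - N%:Z)) = l%:Z - N%:Z by lia.
by rewrite intrB -!pmulrn addnC.
Qed.

Lemma wbound_br x y : (wbound (wbracket x y) <= 2 * maxn (wbound x) (wbound y))%N.
Proof. exact: wbound_wmk. Qed.

Lemma br_shift d P Q : br ('X^d * P) ('X^d * Q) = 'X^(d + d) * br P Q.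
Proof. rewrite /br !derivM derivXn exprD; ring. Qed.

Lemma BR K x y : (wbound x <= K)%N -> (wbound y <= K)%N ->
  Psi (2 * K) (wbracket x y) = br (Psi K x) (Psi K y).
Proof.
move=> hx hy; set N := maxn (wbound x) (wbound y).
have hN : (N <= K)%N by rewrite geq_max hx hy.
have hxN : (wbound x <= N)%N by rewrite leq_max leqnn.
have hyN : (wbound y <= N)%N by rewrite leq_max leqnn orbT.
have e : K = (N + (K - N))%N by rewrite subnKC.
rewrite e mulnDr Psi_shift; last exact: wbound_br.
have := BR0 x y; rewrite -/N => ->.
rewrite !Psi_shift // br_shift; congr (_ * _).
by rewrite mul2n addnn.
Qed.

End BR.

Section Sig.
Variable F : fieldType.
Implicit Types (x y : W F) (n : int).

Lemma wcoef_L m n : wcoef (L F n) m = if m == n then 1 else 0.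
Proof.
rewrite /L wcoef_wmk; case: ifP => // h; case: eqP => // e; subst m.
by move: h; lia.
Qed.

Lemma wbound_L n : (wbound (L F n) <= (absz n).+1)%N.
Proof. exact: wbound_wmk. Qed.

Lemma Psi_L K n : (- K%:Z <= n) -> (n < K%:Z) ->
  Psi K (L F n) = 'X^((absz (n + K%:Z)).+1).
Proof.
move=> h1 h2; have hj : (absz (n + K%:Z)%R < 2 * K)%N by lia.
rewrite /Psi (bigD1 (Ordinal hj)) //= wcoef_L ifT; last by apply/eqP; lia.
rewrite scale1r big1 ?addr0 // => k hk; rewrite wcoef_L ifF ?scale0r //.
apply/negbTE; apply: contra hk => /eqP e; apply/eqP/val_inj => /=; lia.
Qed.

Definition sigw x := x.1.[1] + x.2.[1].

Lemma sigD x y : sigw (x + y) = sigw x + sigw y.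
Proof. rewrite /sigw /= !hornerD; ring. Qed.
Lemma sigZ a x : sigw (a *: x) = a * sigw x.
Proof. rewrite /sigw /= !hornerZ; ring. Qed.
Lemma sig0 : sigw 0 = 0.
Proof. by rewrite /sigw /= horner0 addr0. Qed.
Lemma sig_sum (I : finType) (G : I -> W F) : sigw (\sum_i G i) = \sum_i sigw (G i).
Proof.
apply: (big_ind2 (fun a b => sigw a = b)); first exact: sig0.
  by move=> a b c d <- <-; rewrite sigD.
by [].
Qed.

Lemma Psi_horner1 K x : (wbound x <= K)%N -> (Psi K x).[1] = sigw x.
Proof.
move=> hb; rewrite /Psi horner_sum.
under eq_bigr do rewrite hornerZ hornerXn expr1n mulr1.
move: hb; rewrite /wbound geq_max => /andP[h1 h2].
rewrite /sigw (horner_coef_wide _ h1) (horner_coef_wide _ h2).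
under [X in _ = X + _]eq_bigr do rewrite expr1n mulr1.
under [X in _ = _ + X]eq_bigr do rewrite expr1n mulr1.
rewrite mul2n -addnn big_split_ord /= addrC; congr (_ + _).
  apply: eq_bigr => k _; have -> : ((K + k)%N%:Z - K%:Z) = Posz k by lia.
  by [].
rewrite (reindex_inj rev_ord_inj) /=; apply: eq_bigr => k _.
have -> : ((K - k.+1)%N%:Z - K%:Z) = Negz k by rewrite NegzE; move: (ltn_ord k); lia.
by [].
Qed.

Lemma sig_L n : sigw (L F n) = 1.
Proof.
rewrite -(Psi_horner1 (wbound_L n)) Psi_L; last 2 first.
- lia.
- lia.
by rewrite hornerXn expr1n.
Qed.

Lemma sig_Ogen lam m : sigw (Ogen lam m) = 1 - lam ^+ m.+1.
Proof.
by rewrite /Ogen sigD -scaleNr sigZ !sig_L mulr1.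
Qed.

Lemma sig_inO1 x : inO 1 x -> sigw x = 0.
Proof.
case=> m [c ->]; rewrite sig_sum big1 // => i _.
by rewrite sigZ sig_Ogen expr1n subrr mulr0.
Qed.

Lemma root_inO1 K x : inO 1 x -> (wbound x <= K)%N -> root (Psi K x) 1.
Proof. by move=> h hb; apply/rootP; rewrite Psi_horner1 // sig_inO1. Qed.

Definition E : {poly F} := 'X - 1.

Lemma E_neq0 : E != 0.
Proof. by rewrite /E -polyC1 polyXsubC_eq0. Qed.

Lemma E1 : E.[1] = 0.
Proof. by rewrite /E hornerD hornerN hornerX hornerC subrr. Qed.

Lemma rootE1 P : root P 1 -> exists A, P = E ^+ 1 * A.
Proof.
move/factor_theorem => [q ->]; exists q; rewrite expr1 /E polyC1; ring.
Qed.

Lemma multE1 P : P != 0 -> root P 1 -> exists k B, P = E ^+ k.+1 * B /\ B.[1] != 0.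
Proof.
move=> nz r; have [m [q hq eP]] := multiplicity_XsubC P 1.
move: hq; rewrite nz /= => hq; rewrite eP in r *.
case: m eP r => [|k] eP r; first by move: r; rewrite expr0 mulr1 (negbTE hq).
exists k, q; split; first by rewrite /E polyC1 mulrC.
by move: hq; rewrite /root.
Qed.

Lemma br_E j k A B : exists2 C, br (E ^+ j.+1 * A) (E ^+ k.+1 * B) = E ^+ (j + k).+1 * C
  & C.[1] = (j%:R - k%:R) * A.[1] * B.[1].
Proof.
exists ((j%:R - k%:R) *: (A * B) + E * (A^`() * B - A * B^`())).
  rewrite /br !derivM !deriv_exp /E derivXsubC -/E.
  rewrite -mul_polyC !exprS exprD /=; ring.
by rewrite hornerD hornerZ !hornerM E1 mul0r addr0 mulrA.
Qed.

End Sig.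

Section O1.
Variable R : realFieldType.
Implicit Types (x y : W R).

Lemma O1_noP x y a1 b1 c a2 b2 (r : R) : 0 < r ->
  inO 1 x -> inO 1 y -> inO 1 a1 -> inO 1 b1 -> inO 1 c -> inO 1 a2 -> inO 1 b2 ->
  wbracket x (wbracket x y) + r *: y =
    wbracket (wbracket a1 b1) (wbracket c y) + wbracket (wbracket a2 b2) y ->
  y = 0.
Proof.
move=> rpos hx hy ha1 hb1 hc ha2 hb2 rel.
pose K := maxn (wbound x) (maxn (wbound y) (maxn (wbound a1)
            (maxn (wbound b1) (maxn (wbound a2) (maxn (wbound b2) (wbound c)))))).
have bc : (wbound c <= K)%N by rewrite /K; lia.
have bx : (wbound x <= K)%N by rewrite /K; lia.
have by_ : (wbound y <= K)%N by rewrite /K; lia.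
have ba1 : (wbound a1 <= K)%N by rewrite /K; lia.
have bb1 : (wbound b1 <= K)%N by rewrite /K; lia.
have ba2 : (wbound a2 <= K)%N by rewrite /K; lia.
have bb2 : (wbound b2 <= K)%N by rewrite /K; lia.
apply/eqP; apply/negPn/negP => ny.
have nzPy : Psi K y != 0.
  by apply: contra ny => /eqP /(Psi_eq0 by_) ->.
have [k [B [ePy nB]]] := multE1 nzPy (root_inO1 hy by_).
have [Ax ePx] := rootE1 (root_inO1 hx bx).
have [A1 eA1] := rootE1 (root_inO1 ha1 ba1).
have [B1 eB1] := rootE1 (root_inO1 hb1 bb1).
have [A2 eA2] := rootE1 (root_inO1 ha2 ba2).
have [B2 eB2] := rootE1 (root_inO1 hb2 bb2).
have [Ac ePc] := rootE1 (root_inO1 hc bc).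
have [C1 eC1 vC1] := br_E 0 k Ax B.
have L2xy : Psi (2 * K) (wbracket x y) = E R ^+ k.+1 * C1.
  by rewrite BR // ePx ePy eC1 add0n.
have [Cc eCc _] := br_E 0 k Ac B.
have L2cy : Psi (2 * K) (wbracket c y) = E R ^+ k.+1 * Cc.
  by rewrite BR // ePc ePy eCc add0n.
have [U1' eU1' vU1'] := br_E 0 0 A1 B1.
have [U1 eU1] : exists U1, U1' = E R ^+ 1 * U1.
  by apply: rootE1; apply/rootP; rewrite vU1' subrr !mul0r.
have L2a1 : Psi (2 * K) (wbracket a1 b1) = E R ^+ 2 * U1.
  by rewrite BR // eA1 eB1 eU1' eU1 mulrA -exprD.
have [U2' eU2' vU2'] := br_E 0 0 A2 B2.
have [U2 eU2] : exists U2, U2' = E R ^+ 1 * U2.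
  by apply: rootE1; apply/rootP; rewrite vU2' subrr !mul0r.
have L2a2 : Psi (2 * K) (wbracket a2 b2) = E R ^+ 2 * U2.
  by rewrite BR // eA2 eB2 eU2' eU2 mulrA -exprD.
have L2x : Psi (2 * K) x = E R ^+ 1 * ('X^K * Ax).
  by rewrite mul2n -addnn Psi_shift // ePx mulrCA.
have L2y : Psi (2 * K) y = E R ^+ k.+1 * ('X^K * B).
  by rewrite mul2n -addnn Psi_shift // ePy mulrCA.
have bx2 : (wbound x <= 2 * K)%N by lia.
have by2 : (wbound y <= 2 * K)%N by lia.
have bcy : (wbound (wbracket c y) <= 2 * K)%N.
  by apply: leq_trans (wbound_br c y) _; lia.
have bxy : (wbound (wbracket x y) <= 2 * K)%N.
  by apply: leq_trans (wbound_br x y) _; lia.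
have bab1 : (wbound (wbracket a1 b1) <= 2 * K)%N.
  by apply: leq_trans (wbound_br a1 b1) _; lia.
have bab2 : (wbound (wbracket a2 b2) <= 2 * K)%N.
  by apply: leq_trans (wbound_br a2 b2) _; lia.
have [G1 eG1 vG1] := br_E 0 k ('X^K * Ax) C1.
have [H1 eH1 _] := br_E 1 k U1 Cc.
have [H2 eH2 _] := br_E 1 k U2 ('X^K * B).
have L3a : Psi (2 * (2 * K)) (wbracket x (wbracket x y)) = E R ^+ k.+1 * G1.
  by rewrite BR // L2x L2xy eG1 add0n.
have L3b : Psi (2 * (2 * K)) (wbracket (wbracket a1 b1) (wbracket c y)) =
    E R ^+ k.+1 * (E R * H1).
  by rewrite BR // L2a1 L2cy eH1 add1n mulrA -exprSr.
have L3c : Psi (2 * (2 * K)) (wbracket (wbracket a2 b2) y) =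
    E R ^+ k.+1 * (E R * H2).
  by rewrite BR // L2a2 L2y eH2 add1n mulrA -exprSr.
have L3y : Psi (2 * (2 * K)) y = 'X^(2 * K) * (E R ^+ k.+1 * ('X^K * B)).
  by rewrite [in LHS]mul2n -addnn Psi_shift // L2y.
have := congr1 (Psi (2 * (2 * K))) rel.
rewrite !PsiD PsiZ L3a L3b L3c L3y => eq.
have key : E R ^+ k.+1 * (G1 + r *: ('X^(2 * K) * ('X^K * B)) - E R * (H1 + H2)) = 0.
  have -> : E R ^+ k.+1 * (G1 + r *: ('X^(2 * K) * ('X^K * B)) - E R * (H1 + H2)) =
    (E R ^+ k.+1 * G1 + r *: ('X^(2 * K) * (E R ^+ k.+1 * ('X^K * B)))) -
    (E R ^+ k.+1 * (E R * H1) + E R ^+ k.+1 * (E R * H2)) by rewrite -!mul_polyC; ring.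
  by rewrite eq subrr.
move: key => /eqP; rewrite mulf_eq0 expf_eq0 /= (negbTE (E_neq0 R)) /= => /eqP Z.
have := congr1 (fun p => p.[1]) Z => /=.
rewrite !hornerD hornerN hornerZ !hornerM !hornerXn expr1n E1 vG1 vC1 !hornerM hornerXn !expr1n horner0.
move=> h.
set a := Ax.[1] in h; set b := B.[1] in h nB.
have h2 : ((k%:R * a) ^+ 2 + r) * b = 0.
  rewrite -[RHS]h; ring.
move: h2 => /eqP; rewrite mulf_eq0 (negbTE nB) orbF => /eqP h3.
have := sqr_ge0 (k%:R * a); lra.
Qed.

End O1.

Section Comb.
Variable F : fieldType.

Definition comb (lam : F) (cs : seq F) : W F :=
  \sum_(i < size cs) cs`_i *: Ogen lam i.

Lemma inO_comb lam cs : inO lam (comb lam cs).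
Proof. by exists (size cs), (fun i => cs`_i). Qed.

Lemma wbound_sum n (G : 'I_n -> W F) M :
  (forall i, (wbound (G i) <= M)%N) -> (wbound (\sum_(i < n) G i)%R <= M)%N.
Proof.
move=> h; apply: (big_ind (fun z => (wbound z <= M)%N)) => //.
  by rewrite /wbound /= size_poly0.
move=> u v hu hv; apply: leq_trans (wbound_add u v) _; by rewrite geq_max hu hv.
Qed.

Lemma wbound_Ogen (lam : F) i : (wbound (Ogen lam i) <= i.+2)%N.
Proof.
rewrite /Ogen; apply: leq_trans (wbound_add _ _) _; rewrite wbound_opp geq_max.
apply/andP; split; first exact: (wbound_L F (Posz i.+1)).
apply: leq_trans (wbound_scale _ _) _; exact: (wbound_L F (- Posz i.+1)).
Qed.

Lemma wbound_comb lam cs : (wbound (comb lam cs) <= (size cs).+1)%N.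
Proof.
apply: wbound_sum => i; apply: leq_trans (wbound_scale _ _) _.
by apply: leq_trans (wbound_Ogen _ _) _; rewrite ltnS.
Qed.

Lemma Psi_Ogen K (lam : F) i : (i.+1 < K)%N ->
  Psi K (Ogen lam i) = 'X^(K + i.+2) - lam ^+ i.+1 *: 'X^(K - i).
Proof.
move=> h; rewrite /Ogen PsiD PsiN PsiZ !Psi_L; try lia.
congr (_ - _ *: 'X^_); [congr ('X^_) | ]; lia.
Qed.

Lemma Psi_sum K n (G : 'I_n -> W F) : Psi K (\sum_(i < n) G i) = \sum_(i < n) Psi K (G i).
Proof.
apply: (big_ind2 (fun a b => Psi K a = b)); first exact: Psi0.
  by move=> a b c d <- <-; rewrite PsiD.
by [].
Qed.

Lemma Psi_comb K lam cs : (size cs < K)%N ->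
  Psi K (comb lam cs) =
  \sum_(i < size cs) cs`_i *: ('X^(K + i.+2) - lam ^+ i.+1 *: 'X^(K - i)).
Proof.
move=> h; rewrite /comb Psi_sum.
apply: eq_bigr => i _; rewrite PsiZ Psi_Ogen //.
by apply: leq_ltn_trans h.
Qed.

End Comb.

Section Witness.
Variable R : realFieldType.
Local Notation cm := (comb (-1 : R)).

Lemma br_comb K A B C : (size A < K)%N -> (size B < K)%N -> (size C < 2 * K)%N ->
  br (Psi K (cm A)) (Psi K (cm B)) = Psi (2 * K) (cm C) ->
  wbracket (cm A) (cm B) = cm C.
Proof.
move=> hA hB hC e; apply: (@Psi_inj _ (2 * K)).
- apply: leq_trans (wbound_br _ _) _; rewrite leq_mul2l geq_max.
  by rewrite (leq_trans (wbound_comb _ _)) ?(leq_trans (wbound_comb _ _)) ?orbT.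
- exact: leq_trans (wbound_comb _ _) _.
rewrite BR //; exact: leq_trans (wbound_comb _ _) _.
Qed.

Notation xcs := [:: 4].
Notation ycs := [:: 10; 0; 5; 0; 1].
Notation a1cs := [:: 1].
Notation b1cs := [:: 0; -5].
Notation ccs := [:: 1].
Notation a2cs := [:: 1].
Notation b2cs := [:: 30; 0; -30].
Notation z1cs := [:: 0; -80; 0; -64; 0; -16].
Notation zccs := [:: 0; -20; 0; -16; 0; -4].
Notation z2cs := [:: 15; 0; 5].
Notation z4cs := [:: 0; 120; 0; 60].
Notation xz1cs := [:: 960; 0; 1600; 0; 1216; 0; 320].
Notation z2zccs := [:: 1960; 0; 1680; 0; 1040; 0; 380; 0; 60].
Notation z4ycs := [:: 9240; 0; 5040; 0; 1200; 0; -60; 0; -60].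

Lemma wz1 : wbracket (cm xcs) (cm ycs) = cm z1cs.
Proof.
apply: (@br_comb 6) => //; rewrite !Psi_comb //= /br.
rewrite !big_ord_recr !big_ord0 /= !derivE /= -!mul_polyC; ring.
Qed.

Lemma wzc : wbracket (cm ccs) (cm ycs) = cm zccs.
Proof.
apply: (@br_comb 6) => //; rewrite !Psi_comb //= /br.
rewrite !big_ord_recr !big_ord0 /= !derivE /= -!mul_polyC; ring.
Qed.

Lemma wz2 : wbracket (cm a1cs) (cm b1cs) = cm z2cs.
Proof.
apply: (@br_comb 6) => //; rewrite !Psi_comb //= /br.
rewrite !big_ord_recr !big_ord0 /= !derivE /= -!mul_polyC; ring.
Qed.

Lemma wz4 : wbracket (cm a2cs) (cm b2cs) = cm z4cs.
Proof.
apply: (@br_comb 6) => //; rewrite !Psi_comb //= /br.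
rewrite !big_ord_recr !big_ord0 /= !derivE /= -!mul_polyC; ring.
Qed.

Lemma wxz1 : wbracket (cm xcs) (cm z1cs) = cm xz1cs.
Proof.
apply: (@br_comb 7) => //; rewrite !Psi_comb //= /br.
rewrite !big_ord_recr !big_ord0 /= !derivE /= -!mul_polyC; ring.
Qed.

Lemma wz2zc : wbracket (cm z2cs) (cm zccs) = cm z2zccs.
Proof.
apply: (@br_comb 7) => //; rewrite !Psi_comb //= /br.
rewrite !big_ord_recr !big_ord0 /= !derivE /= -!mul_polyC; ring.
Qed.

Lemma wz4y : wbracket (cm z4cs) (cm ycs) = cm z4ycs.
Proof.
apply: (@br_comb 6) => //; rewrite !Psi_comb //= /br.
rewrite !big_ord_recr !big_ord0 /= !derivE /= -!mul_polyC; ring.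
Qed.

Lemma wrel : cm xz1cs + (1024 : R) *: cm ycs = cm z2zccs + cm z4ycs.
Proof.
apply: (@Psi_inj _ 10).
- apply: leq_trans (wbound_add _ _) _; rewrite geq_max.
  apply/andP; split; first exact: leq_trans (wbound_comb _ _) _.
  apply: leq_trans (wbound_scale _ _) _; exact: leq_trans (wbound_comb _ _) _.
- apply: leq_trans (wbound_add _ _) _; rewrite geq_max.
  by apply/andP; split; apply: leq_trans (wbound_comb _ _) _.
rewrite !PsiD PsiZ !Psi_comb //=.
rewrite !big_ord_recr !big_ord0 /= -!mul_polyC; ring.
Qed.

Lemma sig_y : sigw (cm ycs) = 32.
Proof.
rewrite /comb sig_sum !big_ord_recr big_ord0 /= !sigZ !sig_Ogen.
rewrite !exprS !expr0; ring.
Qed.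

Lemma inO0 (lam : R) : inO lam 0.
Proof. by exists 0%N, (fun _ => 0); rewrite big_ord0. Qed.

Lemma not_iso : ~ Oiso (-1 : R) 1.
Proof.
case=> phi [hmap hlin hbr hinj hsurj].
have phi0 : phi 0 = 0.
  have := hlin 1 0 0 (inO0 _) (inO0 _).
  rewrite scale1r addr0 scale1r.
  move/(congr1 (fun z => z - phi 0)); rewrite subrr addrK => h; by rewrite -h.
have phiD u v : inO (-1) u -> inO (-1) v -> phi (u + v) = phi u + phi v.
  by move=> hu hv; have := hlin 1 u v hu hv; rewrite !scale1r.
have phiZ (r : R) u : inO (-1) u -> phi (r *: u) = r *: phi u.
  by move=> hu; have := hlin r u 0 hu (inO0 _); rewrite !addr0 phi0 addr0.
have inOZ (r : R) u : inO (-1) u -> inO (-1) (r *: u).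
  case=> m [c ->]; exists m, (fun i => r * c i).
  by rewrite scaler_sumr; apply: eq_bigr => i _; rewrite scalerA.
have O := @inO_comb R (-1).
have key : phi (cm ycs) = 0.
  apply: (@O1_noP R (phi (cm xcs)) (phi (cm ycs)) (phi (cm a1cs)) (phi (cm b1cs))
     (phi (cm ccs)) (phi (cm a2cs)) (phi (cm b2cs)) 1024) => //; try exact: hmap.
  rewrite -!hbr ?wz1 ?wzc ?wz2 ?wz4 //.
  rewrite wxz1 wz2zc wz4y -phiZ // -!phiD //.
  rewrite wrel //; try exact: O. apply: inOZ. exact: O.
have : cm ycs = 0.
  by apply: (hinj _ _ (O _) (inO0 _)); rewrite key phi0.
move/(congr1 (@sigw R)); rewrite sig_y sig0 => h.
by move/eqP: h; rewrite pnatr_eq0.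
Qed.

End Witness.

Section Scale.
Variable F : fieldType.
Variable mu : F.
Hypothesis mu0 : mu != 0.
Implicit Types (x y : W F).

Definition scl x : W F :=
  (\poly_(i < size x.1) (mu ^ (Posz i) * x.1`_i),
   \poly_(i < size x.2) (mu ^ (Negz i) * x.2`_i)).

Lemma wcoef_scl x n : wcoef (scl x) n = mu ^ n * wcoef x n.
Proof.
case: n => m /=; rewrite coef_poly; case: ltnP => // h;
  by rewrite nth_default ?mulr0.
Qed.

Lemma wbound_scl x : (wbound (scl x) <= wbound x)%N.
Proof. by rewrite /wbound /= geq_max !leq_max !size_poly ?orbT. Qed.

Lemma scl_lin (c : F) x y : scl (c *: x + y) = c *: scl x + scl y.
Proof.
by apply: weqP => n; rewrite wcoefD wcoefZ !wcoef_scl wcoefD wcoefZ; ring.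
Qed.

Lemma scl0 : scl 0 = 0.
Proof. by apply: weqP => n; rewrite wcoef_scl !wcoef0 mulr0. Qed.

Lemma scl_sum n (G : 'I_n -> W F) : scl (\sum_(i < n) G i) = \sum_(i < n) scl (G i).
Proof.
apply: (big_ind2 (fun a b => scl a = b)); first exact: scl0.
  by move=> a b c d <- <-; rewrite -{1}[a]scale1r scl_lin scale1r.
by [].
Qed.

Lemma sclZ (c : F) x : scl (c *: x) = c *: scl x.
Proof. by rewrite -[c *: x]addr0 scl_lin scl0 addr0. Qed.

Lemma scl_inj x y : scl x = scl y -> x = y.
Proof.
move=> e; apply: weqP => n; have := congr1 (fun z => wcoef z n) e.
by rewrite !wcoef_scl => /(mulfI (expfz_neq0 n mu0)).
Qed.

Definition Smu (P : {poly F}) := P \Po (mu *: 'X).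

Lemma SXn k : Smu 'X^k = mu ^+ k *: 'X^k.
Proof. by rewrite /Smu rmorphXn /= comp_polyX exprZn. Qed.

Lemma br_S P Q : br (Smu P) (Smu Q) = mu *: Smu (br P Q).
Proof.
have d : (mu *: 'X)^`() = mu%:P :> {poly F} by rewrite derivZ derivX -mul_polyC mulr1.
rewrite /br /Smu !deriv_comp d comp_polyB !comp_polyM -!mul_polyC; ring.
Qed.

Lemma br_scale (c : F) P Q : br (c *: P) (c *: Q) = (c * c) *: br P Q.
Proof. by rewrite /br -!mul_polyC !derivM !derivC polyCM; ring. Qed.

Lemma Psi_scl K x : Psi K (scl x) = mu ^- K.+1 *: Smu (Psi K x).
Proof.
rewrite /Psi /Smu raddf_sum scaler_sumr; apply: eq_bigr => k _.
rewrite /= comp_polyZ -/(Smu _) SXn wcoef_scl !scalerA; congr (_ *: _).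
rewrite mulrAC; congr (_ * _).
have -> : (k%:Z - K%:Z) = (k.+1)%:Z + (- (K.+1)%:Z) by lia.
by rewrite expfzDr // -exprnN mulrC.
Qed.

Lemma scl_br x y : scl (wbracket x y) = wbracket (scl x) (scl y).
Proof.
set K := maxn (wbound x) (wbound y).
have hx : (wbound x <= K)%N by rewrite leq_max leqnn.
have hy : (wbound y <= K)%N by rewrite leq_max leqnn orbT.
have hx' := leq_trans (wbound_scl x) hx.
have hy' := leq_trans (wbound_scl y) hy.
apply: (@Psi_inj _ (2 * K)).
- apply: leq_trans (wbound_scl _) _; exact: wbound_br.
- apply: leq_trans (wbound_br _ _) _; rewrite leq_mul2l geq_max.
  by rewrite hx' hy' orbT.
rewrite Psi_scl BR // BR // !Psi_scl.
rewrite br_scale br_S scalerA; congr (_ *: _).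
rewrite -!exprVn -exprD.
have -> : (K.+1 + K.+1 = ((2 * K).+1).+1)%N by lia.
by rewrite [in RHS]exprS mulrAC mulVf // mul1r.
Qed.

Lemma scl_Ogen (a b : F) i : a = b * mu ^+ 2 -> scl (Ogen a i) = mu ^+ i.+1 *: Ogen b i.
Proof.
move=> ab; apply: weqP => n.
rewrite wcoef_scl /Ogen !wcoefZ !wcoefD !wcoefN !wcoefZ !wcoef_L.
have hm : mu ^- i.+1 * mu ^+ i.+1 = 1 by rewrite mulVf // expf_neq0.
case: (eqVneq n (Posz i.+1)) => [->|h1].
  have e : (Posz i.+1 == - Posz i.+1) = false by apply/negbTE/eqP; lia.
  by rewrite e /= -exprnP; ring.
case: (eqVneq n (- Posz i.+1)) => [->|h2].
  rewrite -exprnN ab exprMn -exprM mulnC exprM expr2.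
  transitivity ((mu ^- i.+1 * mu ^+ i.+1) * (- b ^+ i.+1 * mu ^+ i.+1)); first ring.
  by rewrite hm; ring.
by rewrite !mulr0 !subr0 !mulr0.
Qed.

Lemma Oiso_scale (a b : F) : a = b * mu ^+ 2 -> Oiso a b.
Proof.
move=> ab; exists scl; split.
- move=> x [m [c ->]]; exists m, (fun i => c i * mu ^+ i.+1).
  rewrite scl_sum; apply: eq_bigr => i _; by rewrite sclZ (scl_Ogen _ ab) scalerA.
- by move=> c x y _ _; rewrite scl_lin.
- by move=> x y _ _; rewrite scl_br.
- by move=> x y _ _ /scl_inj.
move=> z [m [c ->]].
exists (\sum_(i < m) (c i * mu ^- i.+1) *: Ogen a i).
  by exists m, (fun i => c i * mu ^- i.+1).
rewrite scl_sum; apply: eq_bigr => i _; rewrite sclZ (scl_Ogen _ ab) scalerA.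
by rewrite -mulrA mulVf ?mulr1 // expf_neq0.
Qed.

End Scale.

Theorem corollary4p23 :
  (forall (K : closedFieldType), [pchar K] =i pred0 ->
     forall lam : K, lam != 0 -> Oiso lam 1) /\
  (forall (R : realType),
     (forall lam : R, 0 < lam -> Oiso lam 1) /\
     (forall lam : R, lam < 0 -> Oiso lam (-1)) /\
     ~ Oiso (-1 : R) 1).
Proof.
split.
  move=> K _ lam lam0.
  have [mu hmu] := @solve_monicpoly K 2 (fun i => if i == 0%N then lam else 0) isT.
  move: hmu; rewrite !big_ord_recr big_ord0 /= add0r mulr1 mul0r addr0 => hmu.
  have mu0 : mu != 0 by apply: contra lam0 => /eqP m0; rewrite -hmu m0 expr0n.
  by apply: (@Oiso_scale K mu mu0); rewrite mul1r.
move=> R; split; [|split].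
- move=> lam hl.
  have mu0 : Num.sqrt lam != 0 by rewrite sqrtr_eq0 -ltNge.
  by apply: (@Oiso_scale R _ mu0); rewrite mul1r sqr_sqrtr // ltW.
- move=> lam hl.
  have mu0 : Num.sqrt (- lam) != 0 by rewrite sqrtr_eq0 -ltNge oppr_gt0.
  apply: (@Oiso_scale R _ mu0); rewrite sqr_sqrtr; last by rewrite oppr_ge0 ltW.
  by rewrite mulN1r opprK.
- exact: not_iso.
Qed.
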